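(* Consider the 2-Opt heuristic: start with an arbitrary tour $T$; while there exists an improving 2-change in $T$, perform an improving 2-change; output $T$. For every metric TSP instance with $n\ge 3$ cities, every tour that the 2-Opt heuristic can output (for any starting tour and any choice of improving 2-changes) has length at most $\sqrt{n/2}$ times the length of a shortest tour. Moreover, for every positive integer $k$ and $n=2k^2$ there exists a metric TSP instance with $n$ cities and a starting tour for which the 2-Opt heuristic outputs a tour of length exactly $\sqrt{n/2}$ times the length of a shortest tour (which is positive). In this sense the approximation ratio of the 2-Opt heuristic on metric TSP is $\sqrt{n/2}$, and this is tight.
   Context: A metric TSP instance with $n$ cities consists of a complete undirected graph $G$ on $n$ vertices together with a distance function $c: E(G)\to\mathbb{R}_{\ge 0}$ satisfying the triangle inequality $c(x,y)+c(y,z)\ge c(x,z)$ for all vertices $x,y,z$. A tour is a cycle in $G$ containing all vertices; its length is $c(T)=\sum_{e\in E(T)}c(e)$. Tours are regarded as oriented cycles. For two edges $(a,b)$ and $(x,y)$ of an oriented tour, the 2-change replaces them by $(a,x)$ and $(b,y)$ (reversing the segment from $b$ to $x$), yielding a tour; it is improving if $c(a,x)+c(b,y) < c(a,b)+c(x,y)$. An algorithm has approximation ratio $\alpha(n)\ge 1$ if on every instance with $n$ vertices it finds a tour of length at most $\alpha(n)$ times the length of a shortest tour. *)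

(* Defs.v *)
From HB Require Import structures.
From mathcomp Require Import all_boot all_order all_algebra.
Set Implicit Arguments. Unset Strict Implicit. Unset Printing Implicit Defensive.
Import Order.TTheory GRing.Theory Num.Theory.
Local Open Scope ring_scope.

Section TSP.
Variables (R : rcfType) (n : nat).
Implicit Types (c : 'I_n -> 'I_n -> R) (s t : seq 'I_n).

(* Metric distance function on the complete graph K_n.  The diagonal values
   c x x are never used by tours; we fix them to 0. *)
Definition metric c : Prop :=
  [/\ forall x, c x x = 0,
      forall x y, c x y = c y x,
      forall x y, 0 <= c x y
    & forall x y z, c x z <= c x y + c y z].

(* A tour (oriented cycle through all vertices) is given by the cyclic
   sequence of its vertices: each vertex appears exactly once. *)
Definition is_tour s : Prop := perm_eq s (enum 'I_n).

Definition tour_edges s : seq ('I_n * 'I_n) := zip s (rot 1 s).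

Definition tour_length c s : R := \sum_(e <- tour_edges s) c e.1 e.2.

(* The 2-change on the edges (a,b) = (s_i, s_{i+1}) and
   (x,y) = (s_j, s_{j+1 mod n}), for i < j: replace them by (a,x) and (b,y),
   reversing the segment b ... x. *)
Definition two_change s (i j : nat) : seq 'I_n :=
  take i.+1 s ++ rev (drop i.+1 (take j.+1 s)) ++ drop j.+1 s.

Definition improving_2change c s (i j : nat) : Prop :=
  if s is x0 :: _ then
    let a := nth x0 s i in
    let b := nth x0 s i.+1 in
    let x := nth x0 s j in
    let y := nth x0 s (j.+1 %% size s) in
    (i < j)%N /\ (j < size s)%N /\ c a x + c b y < c a b + c x y
  else False.

Definition two_opt_step c s t : Prop :=
  exists i j, improving_2change c s i j /\ t = two_change s i j.

Inductive two_opt_reach c : seq 'I_n -> seq 'I_n -> Prop :=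
| reach_refl s : two_opt_reach c s s
| reach_step s t u : two_opt_step c s t -> two_opt_reach c t u ->
                     two_opt_reach c s u.

Definition two_optimal c s : Prop := forall i j, ~ improving_2change c s i j.

Definition two_opt_output c s0 t : Prop :=
  is_tour s0 /\ two_opt_reach c s0 t /\ two_optimal c t.

End TSP.

(* Main.v *)
Require Import Defs.
From HB Require Import structures.
From mathcomp Require Import all_boot all_order all_algebra.
From mathcomp Require Import ring lra zify.
Set Implicit Arguments. Unset Strict Implicit. Unset Printing Implicit Defensive.
Import Order.TTheory GRing.Theory Num.Theory.
Local Open Scope ring_scope.

Section Geo.
Variable R : rcfType.

Definition tent0 (r z : R) : R := Num.max 0 (r - `|z|).
Definition W0 (r z : R) : R :=
  if z <= - r then 0 else if z <= 0 then (z + r)^+2 / 2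
  else if z <= r then r^+2 - (r - z)^+2/2 else r^+2.

Ltac normcase z := let H := fresh "Hn" in
  case: (lerP 0 z) => H; [have := ger0_norm H | have := ltr0_norm H]; move=> ?.

Lemma reg1 r z : 0 <= r -> z <= - r -> tent0 r z = 0 /\ W0 r z = 0.
Proof.
move=> r0 hz; rewrite /tent0 /W0 hz; split => //.
case: (lerP 0 (r - `|z|)) => h; normcase z; lra.
Qed.

Lemma reg2 r z : 0 <= r -> - r <= z <= 0 -> tent0 r z = z + r /\ W0 r z = (z + r)^+2 / 2.
Proof.
move=> r0 /andP[h1 h2]; rewrite /tent0 /W0 h2; split.
  case: (lerP 0 (r - `|z|)) => h; normcase z; lra.
case: (lerP z (-r)) => h //; have -> : z = - r by lra.
by rewrite addNr expr0n /= mul0r.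
Qed.

Lemma reg3 r z : 0 <= r -> 0 <= z <= r -> tent0 r z = r - z /\ W0 r z = r^+2 - (r - z)^+2 / 2.
Proof.
move=> r0 /andP[h1 h2]; rewrite /tent0 /W0 h2; split.
  case: (lerP 0 (r - `|z|)) => h; normcase z; lra.
case: (lerP z (-r)) => h.
  have e1 : z = 0 by lra. have e2 : r = 0 by lra.
  by rewrite e1 e2 subrr expr0n /= mul0r subr0.
case: (lerP z 0) => h' //; have -> : z = 0 by lra.
by rewrite subr0 add0r; field.
Qed.

Lemma reg4 r z : 0 <= r -> r <= z -> tent0 r z = 0 /\ W0 r z = r^+2.
Proof.
move=> r0 h; rewrite /tent0 /W0; split.
  case: (lerP 0 (r - `|z|)) => h'; normcase z; lra.
case: (lerP z (-r)) => h1.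
  have e1 : z = 0 by lra. have e2 : r = 0 by lra.
  by rewrite e2 expr0n.
case: (lerP z 0) => h2.
  have e1 : z = 0 by lra. have e2 : r = 0 by lra.
  by rewrite e1 e2; ring.
case: (lerP z r) => h3 //; have -> : z = r by lra.
by rewrite subrr expr0n /= mul0r subr0.
Qed.

Lemma piece r a b : 0 <= r -> a <= b ->
  ~ (a < - r < b) -> ~ (a < 0 < b) -> ~ (a < r < b) ->
  (b - a) / 2 * (tent0 r a + tent0 r b) = W0 r b - W0 r a.
Proof.
move=> r0 ab n1 n2 n3.
case: (ltrP a (-r)) => ha.
  have hb : b <= - r.
    by case: (lerP b (-r)) => // hb; exfalso; apply: n1; rewrite ha hb.
  have [t1 w1] := reg1 r0 (ltW ha); have [t2 w2] := reg1 r0 hb.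
  rewrite t1 t2 w1 w2; ring.
case: (ltrP a 0) => ha'.
  have hb : b <= 0.
    by case: (lerP b 0) => // hb; exfalso; apply: n2; rewrite ha' hb.
  have [t1 w1] := reg2 r0 (ltac:(apply/andP; split; lra) : - r <= a <= 0).
  have [t2 w2] := reg2 r0 (ltac:(apply/andP; split; lra) : - r <= b <= 0).
  rewrite t1 t2 w1 w2; ring.
case: (ltrP a r) => ha''.
  have hb : b <= r.
    by case: (lerP b r) => // hb; exfalso; apply: n3; rewrite ha'' hb.
  have [t1 w1] := reg3 r0 (ltac:(apply/andP; split; lra) : 0 <= a <= r).
  have [t2 w2] := reg3 r0 (ltac:(apply/andP; split; lra) : 0 <= b <= r).
  rewrite t1 t2 w1 w2; ring.
have [t1 w1] := reg4 r0 ha''.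
have [t2 w2] := reg4 r0 (ltac:(lra) : r <= b).
rewrite t1 t2 w1 w2; ring.
Qed.


Definition trap (B : seq R) (f : R -> R) : R :=
  \sum_(0 <= t < (size B).-1) (B`_t.+1 - B`_t) / 2 * (f B`_t + f B`_t.+1).

Lemma trap_tele B f (F : R -> R) :
  (0 < size B)%N ->
  (forall t, (t.+1 < size B)%N ->
     (B`_t.+1 - B`_t) / 2 * (f B`_t + f B`_t.+1) = F B`_t.+1 - F B`_t) ->
  trap B f = F (B`_((size B).-1)) - F (B`_0).
Proof.
move=> sB h; rewrite /trap; apply: (telescope_sumr_eq (fun t => F B`_t)) => //.
move=> t /andP[_ ht]; apply: h; by case: (size B) ht sB.
Qed.

Lemma sorted_le (B : seq R) i j : sorted <=%O B -> (i <= j)%N -> (j < size B)%N -> B`_i <= B`_j.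
Proof.
move=> sB ij js; apply: (le_sorted_leq_nth 0 sB) => //; rewrite inE //.
exact: leq_ltn_trans ij js.
Qed.

Lemma no_between (B : seq R) t (p : R) : sorted <=%O B -> (t.+1 < size B)%N -> p \in B ->
  ~ (B`_t < p < B`_t.+1).
Proof.
move=> sB ht /(nthP 0) [s hs <-] /andP[h1 h2].
case: (leqP s t) => st.
  have := sorted_le sB st (ltnW ht); lra.
have := sorted_le sB st hs; lra.
Qed.

Lemma trap_tent (B : seq R) (c r : R) : sorted <=%O B -> (0 < size B)%N -> 0 <= r ->
  (forall p, p \in [:: c - r; c; c + r] -> B`_0 < p < B`_((size B).-1) -> p \in B) ->
  trap B (fun y => tent0 r (y - c)) = W0 r (B`_((size B).-1) - c) - W0 r (B`_0 - c).
Proof.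
move=> sB s0 r0 hp.
apply: (trap_tele (B:=B) (f:=fun y => tent0 r (y - c)) (F:=fun y => W0 r (y - c))) => // t ht.
have e : B`_t.+1 - B`_t = (B`_t.+1 - c) - (B`_t - c) by ring.
rewrite e; apply: piece => //.
- have := sorted_le sB (leqnSn t) ht; lra.
- have h0 := sorted_le sB (leq0n t) (ltnW ht).
  have hl := sorted_le sB (ltac:(by case: (size B) ht => //=) : (t.+1 <= (size B).-1)%N) (ltac:(by case: (size B) s0) : ((size B).-1 < size B)%N).
  move=> /andP[a1 a2]; apply: (no_between sB ht (p := c - r)).
    apply: hp; first by rewrite !inE eqxx.
    apply/andP; split; lra.
  apply/andP; split; lra.
- have h0 := sorted_le sB (leq0n t) (ltnW ht).
  have hl := sorted_le sB (ltac:(by case: (size B) ht => //=) : (t.+1 <= (size B).-1)%N) (ltac:(by case: (size B) s0) : ((size B).-1 < size B)%N).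
  move=> /andP[a1 a2]; apply: (no_between sB ht (p := c)).
    apply: hp; first by rewrite !inE eqxx orbT.
    apply/andP; split; lra.
  apply/andP; split; lra.
- have h0 := sorted_le sB (leq0n t) (ltnW ht).
  have hl := sorted_le sB (ltac:(by case: (size B) ht => //=) : (t.+1 <= (size B).-1)%N) (ltac:(by case: (size B) s0) : ((size B).-1 < size B)%N).
  move=> /andP[a1 a2]; apply: (no_between sB ht (p := c + r)).
    apply: hp; first by rewrite !inE eqxx !orbT.
    apply/andP; split; lra.
  apply/andP; split; lra.
Qed.


Ltac crush := repeat match goal with
 | |- context[`|?a|] => let H := fresh "H" in case: (lerP 0 a) => H;
        [rewrite (ger0_norm H) | rewrite (ltr0_norm H)]
 | |- context[Num.min ?a ?b] => case: (lerP a b) => ?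
 | |- context[Num.max ?a ?b] => case: (lerP a b) => ?
 end; lra.

Definition dist (L x y : R) : R := Num.min `|x - y| (L - `|x - y|).

Lemma dist_sym L x y : dist L x y = dist L y x.
Proof. by rewrite /dist distrC. Qed.

Lemma dist_tri L x y z : 0 <= x <= L -> 0 <= y <= L -> 0 <= z <= L ->
  dist L x z <= dist L x y + dist L y z.
Proof.
move=> /andP[? ?] /andP[? ?] /andP[? ?]; rewrite /dist.
case: (lerP x y) => ?; case: (lerP y z) => ?; case: (lerP x z) => ?;
repeat match goal with
 | |- context[Num.min ?a ?b] => case: (lerP a b) => ?
 end; lra.
Qed.

Lemma dist_le1 L x y : dist L x y <= `|x - y|.
Proof. rewrite /dist; crush. Qed.

Lemma dist_le2 L x y : dist L x y <= L - `|x - y|.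
Proof. rewrite /dist; crush. Qed.

Definition tentC (L c r y : R) : R := Num.max 0 (r - dist L y c).

Lemma tentC_split L c r y : 0 <= y <= L -> 0 <= c <= L -> 0 <= r -> 2 * r <= L ->
  tentC L c r y = tent0 r (y - (c - L)) + tent0 r (y - c) + tent0 r (y - (c + L)).
Proof.
move=> /andP[? ?] /andP[? ?] ? ?; rewrite /tentC /tent0 /dist.
rewrite (ger0_norm (ltac:(lra) : 0 <= y - (c - L))).
rewrite (ler0_norm (ltac:(lra) : y - (c + L) <= 0)).
case: (lerP 0 (y - c)) => h; [rewrite (ger0_norm h) | rewrite (ltr0_norm h)];
repeat match goal with
 | |- context[Num.min ?a ?b] => case: (lerP a b) => ?
 | |- context[Num.max ?a ?b] => case: (lerP a b) => ?
 end; lra.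
Qed.

Lemma path_uniq (T : eqType) (le : rel T) k s : uniq (k :: s) -> path le k s ->
  path (fun i j => le i j && (i != j)) k s.
Proof.
elim: s k => [//|a s IH] k /= /andP[hk hu] /andP[hl hp].
rewrite hl /=; apply/andP; split.
  by apply/eqP => e; move: hk; rewrite e inE eqxx.
exact: IH.
Qed.

Lemma chain (I : eqType) (x w : I -> R) (L : R) (s : seq I) (k : I) :
  (forall i j, i != j -> 0 < w i -> 0 < w j -> w i + w j <= dist L (x i) (x j)) ->
  path (fun i j => (x i <= x j) && (i != j)) k s -> all (fun j => 0 < w j) (k :: s) ->
  \sum_(j <- k :: s) 2 * w j - w k - w (last k s) <= x (last k s) - x k.
Proof.
move=> hd; elim: s k => [|a s IH] k.
  by move=> _ _; rewrite /= big_seq1; lra.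
move=> /= /andP[/andP[hx hne] hp] /and3P[hk ha hs].
have := IH a hp (ltac:(by rewrite /= ha hs)).
have := hd k a hne hk ha.
have := dist_le1 L (x k) (x a).
rewrite !big_cons.
have -> : `|x k - x a| = x a - x k by rewrite distrC ger0_norm // subr_ge0.
lra.
Qed.

End Geo.

Section G2.
Variable R : rcfType.

Lemma pack1 (I : finType) (L : R) (x w : I -> R) :
  0 <= L -> (forall i, 0 <= w i) -> (forall i, 2 * w i <= L) ->
  (forall i j, i != j -> 0 < w i -> 0 < w j -> w i + w j <= dist L (x i) (x j)) ->
  \sum_i 2 * w i <= L.
Proof.
move=> L0 w0 wL hd.
set S := [seq i <- enum I | 0 < w i].
have e1 : \sum_i 2 * w i = \sum_(i <- S) 2 * w i.
  rewrite big_filter (bigID (fun i => 0 < w i)) /= [X in _ + X]big1 ?addr0.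
    by rewrite big_enum_cond.
  move=> i hi; have : w i = 0 by have := w0 i; move: hi; rewrite -leNgt; lra.
  by move=> ->; rewrite mulr0.
set le := fun i j => x i <= x j.
have tot : total le by move=> i j; rewrite /le le_total.
have pS : perm_eq (sort le S) S by rewrite perm_sort.
rewrite e1 -(perm_big _ pS).
have uS : uniq (sort le S) by rewrite sort_uniq filter_uniq // enum_uniq.
have aS : all (fun j => 0 < w j) (sort le S) by rewrite (perm_all _ pS) filter_all.
have sS : sorted le (sort le S) := sort_sorted tot S.
case E: (sort le S) => [|k s]; first by rewrite big_nil.
rewrite E in uS aS sS.
have hp := path_uniq uS sS.
have ch := chain hd hp aS.
case: s E uS aS sS hp ch => [|a s] E uS aS sS hp ch.
  by rewrite big_seq1; apply: wL.
have hl : last k (a :: s) != k.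
  apply/eqP => e; move: uS => /= /andP[hk _]; move: hk.
  by rewrite -[X in X \notin _]e /= mem_last.
move: aS => /allP aS.
have hk : 0 < w k by apply: aS; rewrite inE eqxx.
have hw : 0 < w (last k (a :: s)) by apply: aS; rewrite mem_last.
have := hd _ _ hl hw hk.
have := dist_le2 L (x (last k (a :: s))) (x k).
have := ler_norm (x (last k (a :: s)) - x k).
lra.
Qed.


Lemma trap_add (B : seq R) f g h : (forall p, p \in B -> f p = g p + h p) ->
  trap B f = trap B g + trap B h.
Proof.
move=> H; rewrite /trap -big_split; apply: eq_big_nat => t /andP[_ ht].
have ht' : (t.+1 < size B)%N by move: ht; case: (size B).
rewrite !H ?mem_nth //=; [ring | exact: ltnW].
Qed.

Lemma trap_sum (I : finType) (B : seq R) (F : I -> R -> R) :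
  trap B (fun z => \sum_i F i z) = \sum_i trap B (F i).
Proof.
rewrite /trap exchange_big /=; apply: eq_bigr => t _.
by rewrite -big_split /= mulr_sumr.
Qed.

Lemma trap_scale (B : seq R) (a : R) f : trap B (fun z => a * f z) = a * trap B f.
Proof.
rewrite /trap mulr_sumr; apply: eq_bigr => t _; ring.
Qed.

Lemma trap_mono (B : seq R) f g : sorted <=%O B -> (forall p, p \in B -> f p <= g p) ->
  trap B f <= trap B g.
Proof.
move=> sB H; rewrite /trap; apply: ler_sum_nat => t /andP[_ ht].
have ht' : (t.+1 < size B)%N by move: ht; case: (size B).
have := sorted_le sB (leqnSn t) ht'.
have := H _ (mem_nth 0 ht'); have := H _ (mem_nth 0 (ltnW ht')).
move=> h1 h2 h3; apply: ler_wpM2l; first lra.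
lra.
Qed.

Lemma dist_ge0 (L a b : R) : 0 <= a <= L -> 0 <= b <= L -> 0 <= dist L a b.
Proof.
move=> /andP[? ?] /andP[? ?]; rewrite /dist.
case: (lerP a b) => ?;
repeat match goal with
 | |- context[Num.min ?a ?b] => case: (lerP a b) => ?
 end; lra.
Qed.


Lemma tentC_ge0 (L c r y : R) : 0 <= tentC L c r y.
Proof. rewrite /tentC; case: (lerP 0 (r - dist L y c)) => ?; lra. Qed.

Lemma tentC_le (L c r y : R) : 0 <= r -> 0 <= dist L y c -> tentC L c r y <= r.
Proof. rewrite /tentC => ? ?; case: (lerP 0 (r - dist L y c)) => ?; lra. Qed.

Lemma tentC_pos (L c r y : R) : 0 < tentC L c r y -> tentC L c r y = r - dist L y c.
Proof. rewrite /tentC; case: (lerP 0 (r - dist L y c)) => ?; lra. Qed.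

Definition ptsi (L yi ri : R) : seq R :=
  [:: (yi - L) - ri; yi - L; (yi - L) + ri; yi - ri; yi; yi + ri;
      (yi + L) - ri; yi + L; (yi + L) + ri].

Lemma pack2 (I : finType) (L : R) (x y r : I -> R) :
  0 < L -> (forall i, 0 <= x i <= L) -> (forall i, 0 <= y i <= L) ->
  (forall i, 0 <= r i) -> (forall i, 2 * r i <= L) ->
  (forall i j, i != j -> r i + r j <= dist L (x i) (x j) + dist L (y i) (y j)) ->
  \sum_i 2 * r i ^+ 2 <= L ^+ 2.
Proof.
move=> L0 hx hy hr hrL hd.
set pts := 0 :: L :: [seq p <- flatten [seq ptsi L (y i) (r i) | i <- enum I] | (0 <= p) && (p <= L)].
set B := sort <=%O pts.
have sB : sorted <=%O B by apply: sort_sorted; exact: le_total.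
have memB : forall p, (p \in B) = (p \in pts) by move=> p; rewrite mem_sort.
have inB : forall p, p \in B -> 0 <= p <= L.
  move=> p; rewrite memB !inE => /orP[/eqP->|/orP[/eqP->|]].
  - apply/andP; split; lra.
  - apply/andP; split; lra.
  by rewrite mem_filter => /andP[].
have szB : (1 < size B)%N by rewrite size_sort.
have sz0 : (0 < size B)%N by exact: ltnW.
have B0 : B`_0 = 0.
  have : 0 \in B by rewrite memB inE eqxx.
  move=> /(nthP 0) [s hs e].
  have := sorted_le sB (leq0n s) hs.
  have := inB _ (mem_nth 0 sz0).
  rewrite e => /andP[h2 _] h1; lra.
have BL : B`_((size B).-1) = L.
  have : L \in B by rewrite memB !inE eqxx orbT.
  move=> /(nthP 0) [s hs e].
  have := sorted_le sB (ltac:(by rewrite -ltnS (prednK sz0)) : (s <= (size B).-1)%N) (ltac:(by rewrite ltn_predL) : ((size B).-1 < size B)%N).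
  have := inB _ (mem_nth 0 (ltac:(by rewrite ltn_predL) : ((size B).-1 < size B)%N)).
  rewrite e => /andP[_ h2] h1; lra.
have tr : forall i, trap B (tentC L (y i) (r i)) = r i ^+ 2.
  move=> i.
  have hyi := hy i; have hri := hr i; have hrLi := hrL i.
  rewrite (trap_add (g := fun z => tent0 (r i) (z - (y i - L)) + tent0 (r i) (z - y i))
                    (h := fun z => tent0 (r i) (z - (y i + L)))); last first.
    by move=> p /inB hp; rewrite tentC_split.
  rewrite (trap_add (g := fun z => tent0 (r i) (z - (y i - L))) (h := fun z => tent0 (r i) (z - y i))) //.
  have hp : forall c, c \in [:: y i - L; y i; y i + L] -> forall p, p \in [:: c - r i; c; c + r i] ->
      B`_0 < p < B`_((size B).-1) -> p \in B.
    move=> c hc p hpc; rewrite B0 BL => /andP[p0 pL]; rewrite memB !inE; apply/orP; right; apply/orP; right.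
    rewrite mem_filter (ltW p0) (ltW pL) /=; apply/flatten_mapP; exists i; first by rewrite mem_enum.
    move: hc hpc; rewrite /ptsi !inE => /or3P[]/eqP-> /or3P[]/eqP->; rewrite ?eqxx ?orbT //.
  rewrite (trap_tent sB sz0 hri (hp (y i - L) (ltac:(by rewrite !inE eqxx)))).
  rewrite (trap_tent sB sz0 hri (hp (y i) (ltac:(by rewrite !inE eqxx ?orbT)))).
  rewrite (trap_tent sB sz0 hri (hp (y i + L) (ltac:(by rewrite !inE eqxx ?orbT)))).
  rewrite B0 BL.
  have [_ w1] := reg4 hri (ltac:(lra) : r i <= L - (y i - L)).
  have [_ w2] := reg1 hri (ltac:(lra) : 0 - (y i + L) <= - r i).
  have e1 : 0 - (y i - L) = L - y i by ring.
  have e2 : L - (y i + L) = 0 - y i by ring.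
  rewrite w1 w2 e1 e2; ring.
have cA : forall p, p \in B -> \sum_i 2 * tentC L (y i) (r i) p <= L.
  move=> p /inB hp.
  apply: (pack1 (x := x) (w := fun i => tentC L (y i) (r i) p)).
  - lra.
  - by move=> i; apply: tentC_ge0.
  - move=> i; have := tentC_le (hr i) (dist_ge0 hp (hy i)); have := hrL i; lra.
  move=> i j hij hi hj.
  have := hd i j hij.
  have := dist_tri (hy i) hp (hy j).
  rewrite (tentC_pos hi) (tentC_pos hj) (dist_sym L (y i) p); lra.
have e : \sum_i 2 * r i ^+ 2 = trap B (fun z => \sum_i 2 * tentC L (y i) (r i) z).
  rewrite trap_sum; apply: eq_bigr => i _.
  by rewrite (trap_scale B 2 (tentC L (y i) (r i))) tr.
rewrite e; apply: le_trans (trap_mono (g := fun _ => L) sB cA) _.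
rewrite (trap_tele (F := fun z => L * z)) // ?B0 ?BL.
  by rewrite mulr0 subr0 expr2.
by move=> t ht; field.
Qed.

End G2.

Lemma cauchy_schwarz (R : rcfType) (I : finType) (l : I -> R) :
  (\sum_i l i) ^+ 2 <= #|I|%:R * \sum_i l i ^+ 2.
Proof.
have h : 0 <= \sum_i \sum_j (l i - l j) ^+ 2.
  by apply: sumr_ge0 => i _; apply: sumr_ge0 => j _; apply: sqr_ge0.
have e : \sum_i \sum_j (l i - l j) ^+ 2 =
    2 * (#|I|%:R * \sum_i l i ^+ 2) - 2 * (\sum_i l i) ^+ 2.
  transitivity (\sum_i (#|I|%:R * l i ^+ 2 + \sum_j l j ^+ 2 - 2 * (l i * \sum_j l j))).
    apply: eq_bigr => i _.
    rewrite (eq_bigr (fun j => (l i ^+ 2 + l j ^+ 2) - 2 * (l i * l j))); last by move=> j _; ring.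
    rewrite sumrB big_split /= sumr_const -mulr_natl -mulr_sumr -mulr_sumr; ring.
  rewrite sumrB big_split /= sumr_const -!mulr_sumr -mulr_suml -mulr_natr.
  have -> : #|[pred x : I | true]| = #|I| by apply: eq_card. rewrite -mulr_natl.
  rewrite expr2; ring.
have := h; rewrite e; lra.
Qed.

Lemma final_bound (R : rcfType) (I : finType) (l : I -> R) (L : R) :
  0 <= L -> (forall i, 0 <= l i) -> \sum_i 2 * l i ^+ 2 <= L ^+ 2 ->
  \sum_i l i <= Num.sqrt (#|I|%:R / 2) * L.
Proof.
move=> L0 l0 h.
have S0 : 0 <= \sum_i l i by apply: sumr_ge0 => i _; apply: l0.
have Q0 : 0 <= Num.sqrt (#|I|%:R / 2) * L by apply: mulr_ge0 => //; apply: sqrtr_ge0.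
rewrite -(ler_sqr (x := \sum_i l i)) ?nnegrE //.
rewrite exprMn sqr_sqrtr; last by apply: divr_ge0; rewrite ?ler0n.
have cs := cauchy_schwarz l.
have e : \sum_i 2 * l i ^+ 2 = 2 * \sum_i l i ^+ 2 by rewrite mulr_sumr.
rewrite e in h.
have n0 : 0 <= (#|I|%:R : R) by rewrite ler0n.
have : #|I|%:R * \sum_i l i ^+ 2 <= #|I|%:R / 2 * L ^+ 2.
  rewrite -mulrA; apply: ler_wpM2l => //; lra.
lra.
Qed.

Lemma two_change_perm n (s : seq (ordinal n)) i j : (i < j)%N ->
  perm_eq (two_change s i j) s.
Proof.
move=> ij; rewrite /two_change.
have e : s = take i.+1 s ++ drop i.+1 (take j.+1 s) ++ drop j.+1 s.
  rewrite catA -{1}(take_takel (i:=i.+1) (j:=j.+1) s) ?ltnS 1?ltnW //.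
  by rewrite cat_take_drop cat_take_drop.
rewrite [in X in perm_eq _ X]e perm_cat2l perm_cat2r.
by rewrite perm_rev.
Qed.

Section Tours.
Variables (R : rcfType) (n : nat).
Implicit Types (c : 'I_n -> 'I_n -> R) (s t : seq 'I_n).

Lemma reach_tour c s u : two_opt_reach c s u -> is_tour s -> is_tour u.
Proof.
elim=> [//|s1 t1 u1 [i [j [hi ->]]] _ IH] h1; apply: IH.
rewrite /is_tour; apply: perm_trans h1; apply: two_change_perm.
by move: hi; rewrite /improving_2change; case: s1 => [//|x0 s'] [].
Qed.

Lemma nth_rot1 (T : Type) (x0 : T) (s : seq T) i : (i < size s)%N ->
  nth x0 (rot 1 s) i = nth x0 s (i.+1 %% size s).
Proof.
case: s => [//|a s] /= hi; rewrite rot1_cons nth_rcons.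
case: ltnP => h.
  by rewrite modn_small.
have e : i = size s by lia.
by rewrite e eqxx modnn.
Qed.

Lemma tour_length_nth c s x0 : tour_length c s =
  \sum_(i < size s) c (nth x0 s i) (nth x0 s (i.+1 %% size s)).
Proof.
rewrite /tour_length /tour_edges (big_nth (x0, x0)) size_zip size_rot minnn big_mkord.
apply: eq_bigr => i _.
by rewrite nth_zip ?size_rot //= nth_rot1.
Qed.


Definition gap c (o : seq 'I_n) (x0 : 'I_n) (k : nat) := c (nth x0 o k) (nth x0 o (k.+1 %% n)).
Definition psum c (o : seq 'I_n) (x0 : 'I_n) (k : nat) := \sum_(0 <= m < k) gap c o x0 m.

Lemma psumS c o x0 k : psum c o x0 k.+1 = psum c o x0 k + gap c o x0 k.
Proof. by rewrite /psum big_nat_recr. Qed.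

Lemma psum0 c o x0 : psum c o x0 0 = 0.
Proof. by rewrite /psum big_geq. Qed.

Lemma gap_ge0 c o x0 (k : nat) : metric c -> 0 <= gap c o x0 k.
Proof. by case=> _ _ h _; apply: h. Qed.

Lemma psum_mono c o x0 a b : metric c -> (a <= b)%N -> psum c o x0 a <= psum c o x0 b.
Proof.
move=> mc; elim: b => [|b IH]; first by rewrite leqn0 => /eqP->.
rewrite leq_eqVlt => /orP[/eqP->//|]; rewrite ltnS => /IH h.
rewrite psumS; have := gap_ge0 o x0 b mc; lra.
Qed.

Lemma path_bound c o x0 a b : metric c -> (a <= b)%N -> (b < n)%N ->
  c (nth x0 o a) (nth x0 o b) <= psum c o x0 b - psum c o x0 a.
Proof.
move=> mc; have [h0 hs hp ht] := mc.
elim: b => [|b IH]; first by rewrite leqn0 => /eqP-> _; rewrite h0 subrr.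
rewrite leq_eqVlt => /orP[/eqP-> _|]; first by rewrite h0 subrr.
rewrite ltnS => ab bn.
have := IH ab (ltnW bn).
have := ht (nth x0 o a) (nth x0 o b) (nth x0 o b.+1).
rewrite psumS /gap modn_small //; lra.
Qed.

Lemma wrap_bound c o x0 a b : metric c -> (a <= b)%N -> (b < n)%N ->
  c (nth x0 o b) (nth x0 o a) <= psum c o x0 n - psum c o x0 b + psum c o x0 a.
Proof.
move=> mc ab bn; have [h0 hs hp ht] := mc.
have n0 : (0 < n)%N by lia.
have e : n = n.-1.+1 by rewrite prednK.
have h1 := path_bound o x0 mc (ltac:(lia) : (b <= n.-1)%N) (ltac:(lia) : (n.-1 < n)%N).
have h2 := path_bound o x0 mc (leq0n a) (leq_ltn_trans ab bn).
have h3 : psum c o x0 n = psum c o x0 n.-1 + c (nth x0 o n.-1) (nth x0 o 0).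
  by rewrite {1}e psumS /gap -e modnn.
have := ht (nth x0 o b) (nth x0 o n.-1) (nth x0 o a).
have := ht (nth x0 o n.-1) (nth x0 o 0) (nth x0 o a).
rewrite psum0 in h2; lra.
Qed.


Lemma dist_of (L a b z : R) : a <= b -> z <= b - a -> z <= L - (b - a) -> z <= dist L a b.
Proof.
move=> ab h1 h2; rewrite /dist; case: (lerP a b) => ?;
repeat match goal with
 | |- context[Num.min ?a ?b] => case: (lerP a b) => ?
 end; lra.
Qed.

Lemma dist_half (L a b : R) : 2 * dist L a b <= L.
Proof.
rewrite /dist; case: (lerP `|a - b| (L - `|a - b|)) => ?; lra.
Qed.

Lemma opt_bound c (o : seq 'I_n) x0 u v : metric c -> is_tour o ->
  c u v <= dist (psum c o x0 n) (psum c o x0 (index u o)) (psum c o x0 (index v o)).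
Proof.
move=> mc to; have [h0 hs hp ht] := mc.
have so : size o = n by rewrite (perm_size to) size_enum_ord.
have mo : forall w, w \in o by move=> w; rewrite (perm_mem to) mem_enum.
have iu : (index u o < n)%N by have := index_mem u o; rewrite so mo.
have iv : (index v o < n)%N by have := index_mem v o; rewrite so mo.
have gen : forall a b, (a <= b < n)%N ->
    c (nth x0 o a) (nth x0 o b) <= dist (psum c o x0 n) (psum c o x0 a) (psum c o x0 b).
  move=> a b /andP[ab bn].
  apply: dist_of; first exact: psum_mono.
    exact: path_bound.
  have := wrap_bound o x0 mc ab bn; rewrite hs; lra.
case: (leqP (index u o) (index v o)) => h.
  by have := gen _ _ (ltac:(by rewrite h iv) : (index u o <= index v o < n)%N); rewrite !nth_index.
rewrite hs dist_sym.
by have := gen _ _ (ltac:(by rewrite (ltnW h) iu) : (index v o <= index u o < n)%N); rewrite !nth_index.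
Qed.

Lemma opt_ineq c (t : seq 'I_n) x0 i j : size t = n -> two_optimal c t -> (i < j)%N -> (j < n)%N ->
  c (nth x0 t i) (nth x0 t i.+1) + c (nth x0 t j) (nth x0 t (j.+1 %% n)) <=
  c (nth x0 t i) (nth x0 t j) + c (nth x0 t i.+1) (nth x0 t (j.+1 %% n)).
Proof.
move=> st topt ij jn; have H := topt i j; rewrite /improving_2change in H.
case: t st topt H => [|a t'] st topt H; first by move: st => /= st; lia.
rewrite st in H.
have hi : (i < size (a :: t'))%N by rewrite st; lia.
have hi1 : (i.+1 < size (a :: t'))%N by rewrite st; lia.
have hj : (j < size (a :: t'))%N by rewrite st; lia.
have hj1 : (j.+1 %% n < size (a :: t'))%N by rewrite st ltn_mod; lia.
rewrite !(set_nth_default a x0) //.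
rewrite leNgt; apply/negP => h; apply: H; split => //; split => //; rewrite -st //.
Qed.


Lemma part1 c s0 t (opt : seq 'I_n) : (3 <= n)%N -> metric c -> two_opt_output c s0 t ->
  is_tour opt -> tour_length c t <= Num.sqrt (n%:R / 2) * tour_length c opt.
Proof.
move=> n3 mc [ts0 [rch topt]] topt'.
have [h0 hs hp ht] := mc.
have tt := reach_tour rch ts0.
have st : size t = n by rewrite (perm_size tt) size_enum_ord.
have n0 : (0 < n)%N by lia.
pose x0 := Ordinal n0.
rewrite (tour_length_nth c t x0) (tour_length_nth c opt x0) st (perm_size topt') size_enum_ord.
have eL : \sum_(i < n) c (nth x0 opt i) (nth x0 opt (i.+1 %% n)) = psum c opt x0 n
  by rewrite /psum big_mkord.
rewrite eL.
set L := psum c opt x0 n.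
pose pos := fun v => psum c opt x0 (index v opt).
have hb : forall u v, c u v <= dist L (pos u) (pos v) := fun u v => opt_bound x0 u v mc topt'.
have L0 : 0 <= L by apply: sumr_ge0 => k _; apply: gap_ge0.
have so : size opt = n by rewrite (perm_size topt') size_enum_ord.
have hpos : forall v, 0 <= pos v <= L.
  move=> v; have iv : (index v opt < n)%N.
    by have := index_mem v opt; rewrite so (perm_mem topt') mem_enum.
  rewrite /pos; apply/andP; split.
    by rewrite -(psum0 c opt x0); apply: psum_mono => //.
  by apply: psum_mono => //; apply: ltnW.
have l2 : forall i : 'I_n, 2 * c (nth x0 t i) (nth x0 t (i.+1 %% n)) <= L.
  move=> i; have := hb (nth x0 t i) (nth x0 t (i.+1 %% n)).
  have := dist_half L (pos (nth x0 t i)) (pos (nth x0 t (i.+1 %% n))); lra.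
have l0 : forall i : 'I_n, 0 <= c (nth x0 t i) (nth x0 t (i.+1 %% n)) by move=> i; apply: hp.
case: (ltrP 0 L) => Lpos; last first.
  have L00 : L = 0 by lra.
  rewrite L00 mulr0 big1 // => i _; have := l2 i; have := l0 i; lra.
have H : \sum_(i < n) 2 * c (nth x0 t i) (nth x0 t (i.+1 %% n)) ^+ 2 <= L ^+ 2.
  apply: (pack2 (x := fun i : 'I_n => pos (nth x0 t i))
                (y := fun i : 'I_n => pos (nth x0 t (i.+1 %% n)))) => //.
  move=> i j hij.
  have key : forall a b : 'I_n, (a < b)%N ->
      c (nth x0 t a) (nth x0 t (a.+1 %% n)) + c (nth x0 t b) (nth x0 t (b.+1 %% n)) <=
      dist L (pos (nth x0 t a)) (pos (nth x0 t b)) +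
      dist L (pos (nth x0 t (a.+1 %% n))) (pos (nth x0 t (b.+1 %% n))).
    move=> a b ab.
    have h := opt_ineq x0 st topt ab (ltn_ord b).
    rewrite (modn_small (ltac:(have := ltn_ord b; lia) : (a.+1 < n)%N)).
    have := hb (nth x0 t a) (nth x0 t b).
    have := hb (nth x0 t a.+1) (nth x0 t (b.+1 %% n)).
    lra.
  case: (ltngtP i j) => h.
  - exact: key.
  - have := key j i h; rewrite (dist_sym L (pos (nth x0 t j))) (dist_sym L (pos (nth x0 t (j.+1 %% n)))); lra.
  - by move: hij; rewrite (val_inj h) eqxx.
have := final_bound L0 l0 H; rewrite card_ord.
done.
Qed.

End Tours.

Section Nat.
Local Open Scope nat_scope.
Variable k : nat.
Hypothesis k0 : 0 < k.

Definition ee t := t %% k.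
Definition pp t := t %/ k.
Definition oo t := (t %% k + t %/ k) %% k.
Definition QQ i := if odd i then (2 * oo i./2).+1 else 2 * ee i./2.
Definition JJ i := i./2 %/ k.
Definition pi i := QQ i * k + JJ i.
Definition NN := 2 * k ^ 2.

Lemma ee_lt t : ee t < k. Proof. by rewrite /ee ltn_mod. Qed.
Lemma oo_lt t : oo t < k. Proof. by rewrite /oo ltn_mod. Qed.
Lemma pp_lt t : t < k ^ 2 -> pp t < k. Proof. by move=> h; rewrite /pp ltn_divLR // -expnSr. Qed.

Lemma half_lt i : i < NN -> i./2 < k ^ 2.
Proof. rewrite /NN => h; have := odd_double_half i; rewrite -muln2; lia. Qed.

Lemma JJ_lt i : i < NN -> JJ i < k.
Proof. by move=> h; apply: pp_lt; apply: half_lt. Qed.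

Lemma QQ_lt i : QQ i < 2 * k.
Proof. rewrite /QQ; case: (odd i); have := oo_lt i./2; have := ee_lt i./2; lia. Qed.

Lemma odd_QQ i : odd (QQ i) = odd i.
Proof. by rewrite /QQ; case: (odd i); rewrite /= oddM. Qed.

Lemma pi_lt i : i < NN -> pi i < NN.
Proof.
move=> h; rewrite /pi /NN; have := JJ_lt h; have := QQ_lt i; nia.
Qed.

Lemma pi_div i : i < NN -> pi i %/ k = QQ i.
Proof. by move=> h; rewrite /pi divnMDl // divn_small ?addn0 // JJ_lt. Qed.

Lemma pi_mod i : i < NN -> pi i %% k = JJ i.
Proof. by move=> h; rewrite /pi modnMDl modn_small // JJ_lt. Qed.

Lemma half_eq i j : odd i = odd j -> i./2 = j./2 -> i = j.
Proof. move=> h1 h2; rewrite -(odd_double_half i) -(odd_double_half j) h1 h2 //. Qed.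

Lemma ep_inj t t' : ee t = ee t' -> pp t = pp t' -> t = t'.
Proof. rewrite /ee /pp => h1 h2; nia. Qed.

Lemma modD_cancel a b p : a < k -> b < k -> (a + p) %% k = (b + p) %% k -> a = b.
Proof.
move=> ha hb h; have : (a + p == b + p %[mod k]) by apply/eqP.
by rewrite eqn_modDr !modn_small // => /eqP.
Qed.

Lemma modD_cancel_l a b p : a < k -> b < k -> (p + a) %% k = (p + b) %% k -> a = b.
Proof. by move=> ha hb; rewrite ![p + _]addnC; apply: modD_cancel. Qed.

Lemma pi_inj i j : i < NN -> j < NN -> pi i = pi j -> i = j.
Proof.
move=> hi hj e.
have eQ : QQ i = QQ j by rewrite -pi_div // e pi_div.
have eJ : JJ i = JJ j by rewrite -pi_mod // e pi_mod.
have eo : odd i = odd j by rewrite -odd_QQ eQ odd_QQ.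
apply: half_eq => //; apply: ep_inj => //.
move: eQ; rewrite /QQ eo; case: (odd j) => eQ.
  have eo' : oo i./2 = oo j./2 by lia.
  move: eo'; rewrite /oo /JJ in eJ *; rewrite eJ => h.
  by rewrite /ee; apply: (modD_cancel (ltn_pmod _ k0) (ltn_pmod _ k0) h).
lia.
Qed.


Lemma half_dec i : i = odd i + 2 * i./2.
Proof. by rewrite {1}(esym (odd_double_half i)) -muln2 mulnC. Qed.

Lemma QQ_odd_succ i : odd i -> i < NN ->
  QQ (i.+1 %% NN) = 2 * ((i./2).+1 %% k).
Proof.
move=> oi hi.
have e : i.+1 = 2 * (i./2).+1 by have := half_dec i; rewrite oi; lia.
have e2 : i.+1 %% NN = 2 * ((i./2).+1 %% k ^ 2) by rewrite e /NN muln_modr.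
rewrite e2 /QQ oddM /= [X in X./2]mul2n doubleK /ee.
congr (2 * _).
by apply/eqP; rewrite modn_dvdm // dvdn_exp.
Qed.

Lemma QQ_even_succ i : ~~ odd i -> i < NN ->
  QQ (i.+1 %% NN) = (2 * oo i./2).+1.
Proof.
move=> oi hi.
have e : i = 2 * i./2 by have := half_dec i; rewrite (negbTE oi); lia.
have hl : i.+1 < NN by move: hi; rewrite /NN e; lia.
rewrite modn_small // /QQ /= oi /=.
have -> : uphalf i = i./2 by rewrite {1}e mul2n uphalf_double.
by [].
Qed.

Lemma euler i j : i < NN -> j < NN -> QQ i = QQ j ->
  QQ (i.+1 %% NN) = QQ (j.+1 %% NN) -> i = j.
Proof.
move=> hi hj e1 e2.
have eo : odd i = odd j by rewrite -odd_QQ e1 odd_QQ.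
apply: half_eq => //.
have hpi := pp_lt (half_lt hi); have hpj := pp_lt (half_lt hj).
case oi: (odd i).
- have oj : odd j by rewrite -eo oi.
  rewrite (QQ_odd_succ oi hi) (QQ_odd_succ oj hj) in e2.
  have e3 : (i./2).+1 %% k = (j./2).+1 %% k by lia.
  have ee3 : ee i./2 = ee j./2.
    rewrite /ee; apply: (modD_cancel (p := 1) (ltn_pmod _ k0) (ltn_pmod _ k0)).
    by rewrite !modnDml !addn1.
  move: e1; rewrite /QQ oi oj => e1.
  have eo3 : oo i./2 = oo j./2 by lia.
  apply: ep_inj => //; apply: (modD_cancel_l (p := ee i./2) hpi hpj).
  rewrite [X in _ = (X + _) %% _]ee3; exact: eo3.
- have oi' : ~~ odd i by rewrite oi.
  have oj' : ~~ odd j by rewrite -eo oi.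
  rewrite (QQ_even_succ oi' hi) (QQ_even_succ oj' hj) in e2.
  have eo3 : oo i./2 = oo j./2 by lia.
  move: e1; rewrite /QQ oi (negbTE oj') => e1.
  have ee3 : ee i./2 = ee j./2 by lia.
  apply: ep_inj => //; apply: (modD_cancel_l (p := ee i./2) hpi hpj).
  rewrite [X in _ = (X + _) %% _]ee3; exact: eo3.
Qed.

End Nat.

Section FR.
Variable R : rcfType.

Definition fR (a b : nat) : R := if a == b then 0 else if odd a == odd b then 2 else 1.

Lemma fR_ge0 a b : 0 <= fR a b.
Proof. rewrite /fR; case: ifP => _; [lra|case: ifP => _; lra]. Qed.

Lemma fR_sym a b : fR a b = fR b a.
Proof. by rewrite /fR eq_sym [odd b == _]eq_sym. Qed.

Lemma fR_tri a b d : fR a d <= fR a b + fR b d.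
Proof.
have [<-|ab] := eqVneq a b; first by rewrite {2}/fR eqxx add0r.
have [<-|bd] := eqVneq b d; first by rewrite {3}/fR eqxx addr0.
rewrite /fR (negbTE ab) (negbTE bd).
case: (a == d); first by case: ifP => _; case: ifP => _; lra.
by case: (odd a); case: (odd b); case: (odd d) => /=; lra.
Qed.

Lemma fR_neq a b : a != b -> 1 <= fR a b.
Proof. by rewrite /fR => /negbTE ->; case: ifP => _; lra. Qed.

Lemma fR_par a b : odd b = ~~ odd a -> fR a b = 1.
Proof.
move=> h; rewrite /fR h; case: (eqVneq a b) => [e|_].
  by move: h; rewrite e; case: (odd b).
by case: (odd a).
Qed.

Lemma fR_2opt a b x y : odd b = ~~ odd a -> odd y = ~~ odd x -> ~ (a = x /\ b = y) ->
  fR a b + fR x y <= fR a x + fR b y.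
Proof.
move=> hb hy hn; rewrite (fR_par hb) (fR_par hy).
have [ax|ax] := eqVneq a x.
  have [by'|bny] := eqVneq b y; first by exfalso; apply: hn.
  rewrite /fR ax eqxx (negbTE bny) hb hy ax eqxx; lra.
have h1 := fR_neq ax.
have [by'|bny] := eqVneq b y.
  have : odd a = odd x by apply: negb_inj; rewrite -hb -hy by'.
  rewrite /fR (negbTE ax) by' eqxx => ->; rewrite eqxx; lra.
have := fR_neq bny; lra.
Qed.

End FR.

Section Construct.
Variables (R : rcfType) (k : nat).
Hypothesis k0 : (0 < k)%N.
Local Notation N := (2 * k ^ 2)%N.

Definition cc (u v : 'I_N) : R := fR R (u %/ k) (v %/ k).

Lemma cc_metric : metric cc.
Proof.
split.
- by move=> x; rewrite /cc /fR eqxx.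
- by move=> x y; rewrite /cc fR_sym.
- by move=> x y; apply: fR_ge0.
- by move=> x y z; apply: fR_tri.
Qed.

Lemma N0 : (0 < N)%N.
Proof. by rewrite muln_gt0 expn_gt0 k0. Qed.

Definition piO (i : 'I_N) : 'I_N := Ordinal (pi_lt k0 (ltn_ord i)).

Lemma piO_inj : injective piO.
Proof. by move=> i j /(congr1 val) /= /(pi_inj k0 (ltn_ord i) (ltn_ord j)) /val_inj. Qed.

Definition s0 : seq 'I_N := [seq piO i | i <- enum 'I_N].

Lemma s0_tour : is_tour s0.
Proof.
rewrite /is_tour /s0; apply: uniq_perm; rewrite ?(map_inj_uniq piO_inj) ?enum_uniq //.
move=> x; rewrite mem_enum; have [g gK Kg] := injF_bij piO_inj.
by rewrite -[x]Kg map_f // mem_enum.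
Qed.

Lemma size_s0 : size s0 = N.
Proof. by rewrite size_map size_enum_ord. Qed.

Lemma nth_s0 x0 m : (m < N)%N -> (nth x0 s0 m : nat) = pi k m.
Proof.
move=> hm; rewrite /s0 (nth_map x0) ?size_enum_ord //=.
by rewrite nth_enum_ord.
Qed.

Lemma odd_succ_mod m : odd (m.+1 %% N) = ~~ odd m.
Proof. by rewrite odd_mod //= oddM. Qed.

Lemma L_s0 : tour_length cc s0 = N%:R.
Proof.
have x0 : 'I_N := Ordinal N0.
rewrite (tour_length_nth cc s0 x0) size_s0.
rewrite (eq_bigr (fun _ => 1)); first by rewrite sumr_const card_ord.
move=> i _; rewrite /cc !nth_s0 ?ltn_pmod ?N0 // !pi_div ?ltn_pmod ?N0 //.
by apply: fR_par; rewrite !odd_QQ odd_succ_mod.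
Qed.

Lemma s0_opt : two_optimal cc s0.
Proof.
move=> i j; rewrite /improving_2change.
have hs : s0 = nth (Ordinal N0) s0 0 :: behead s0.
  by case E: s0 => [|a s]; [move: size_s0; rewrite E /=; have := N0; lia | by []].
rewrite hs -hs => [[ij [jn]]].
rewrite size_s0 in jn *.
set x0 := nth _ s0 0.
have hi : (i < N)%N by lia.
have hi1 : (i.+1 < N)%N by lia.
have hj1 : (j.+1 %% N < N)%N by rewrite ltn_pmod // N0.
rewrite /cc !nth_s0 // !pi_div // -(modn_small hi1).
apply/negP; rewrite -leNgt; apply: fR_2opt.
- by rewrite !odd_QQ odd_succ_mod.
- by rewrite !odd_QQ odd_succ_mod.
move=> [e1 e2]; have := euler k0 hi jn e1 e2; lia.
Qed.


Lemma divN1 : (N.-1 %/ k = (2 * k).-1)%N.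
Proof.
have e : N.-1 = ((2 * k).-1 * k + k.-1)%N by nia.
by rewrite e divnMDl // divn_small ?addn0 // prednK.
Qed.

Lemma L_opt : tour_length cc (enum 'I_N) = (2 * k)%:R.
Proof.
have x0 : 'I_N := Ordinal N0.
rewrite (tour_length_nth cc (enum 'I_N) x0) size_enum_ord.
set F := fun i : nat => fR R (i %/ k) ((i.+1 %% N) %/ k).
rewrite (eq_bigr (fun i : 'I_N => F i)); last first.
  by move=> i _; rewrite /cc /F !nth_enum_ord // ltn_pmod // N0.
rewrite -(big_mkord xpredT F).
have E := @big_nat_recr R 0 +%R N.-1 0 F (leq0n _).
rewrite (prednK N0) in E; rewrite E.
rewrite (telescope_sumr_eq (fun i => (i %/ k)%:R)) ?leq0n //; last first.
  move=> i /andP[_ hi]; rewrite /F modn_small; last by have := N0; lia.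
  rewrite div.divnS //; case: (k %| i.+1)%N => /=.
    rewrite add1n fR_par; last by rewrite /=.
    by rewrite mulrS addrK.
  by rewrite add0n subrr /fR eqxx.
rewrite /F prednK ?N0 // modnn div0n divN1.
rewrite fR_par; last first.
  have e : (2 * k).-1 = (2 * k.-1).+1 by have := k0; lia.
  by rewrite e /= oddM.
have -> : ((2 * k)%:R : R) = ((2 * k).-1)%:R + 1 by rewrite natr1 prednK // muln_gt0 k0.
by rewrite ?mulr0n ?subr0.
Qed.


End Construct.

Section Cyc.
Local Open Scope nat_scope.
Lemma cyclic (M : nat) (P : nat -> bool) : (0 < M)%N ->
  (exists2 i, (i < M)%N & P i) -> (exists2 j, (j < M)%N & ~~ P j) ->
  exists2 i, (i < M)%N & P i && ~~ P (i.+1 %% M).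
Proof.
move=> M0 [i0 hi0 p0] [j hj pj].
case: (boolP [exists i : 'I_M, P i && ~~ P (i.+1 %% M)]) => [/existsP [i hi]|/existsPn H].
  by exists i.
have all : forall m, P ((i0 + m) %% M).
  elim=> [|m IH]; first by rewrite addn0 modn_small.
  have hr : ((i0 + m) %% M < M)%N by rewrite ltn_pmod.
  have := H (Ordinal hr); rewrite /= IH /= negbK.
  by rewrite -[_.+1]addn1 modnDml addn1 addnS.
have := all (j + M - i0)%N.
have -> : (i0 + (j + M - i0))%N = (j + M)%N by lia.
by rewrite modnDr modn_small // (negbTE pj).
Qed.
End Cyc.

Lemma sum_eq_le1 (R : rcfType) (a m : nat) : \sum_(Qc < m) ((a == Qc)%:R : R) <= 1.
Proof.
case: (ltnP a m) => h.
  rewrite (bigD1 (Ordinal h)) //= eqxx big1 ?addr0 //.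
  by move=> Qc hQ; rewrite eq_sym; move: hQ; rewrite -val_eqE /= => /negbTE ->.
rewrite big1 ?ler01 // => Qc _.
have : a != Qc by apply/eqP => e; move: h; rewrite e leqNgt ltn_ord.
by move/negbTE ->.
Qed.

Lemma inner_le (R : rcfType) (a b m : nat) :
  \sum_(Qc < m) (((a == Qc) && (b != Qc))%:R : R) <= fR R a b.
Proof.
case: (eqVneq a b) => [<-|ab].
  rewrite big1 ?fR_ge0 // => Qc _.
  by case: (eqVneq a Qc).
have h1 : (1 : R) <= fR R a b by apply: fR_neq.
apply: le_trans h1; apply: le_trans (sum_eq_le1 R a m).
apply: ler_sum => Qc _; case: (a == Qc); case: (b != Qc) => //=; lra.
Qed.

Section Lower.
Variables (R : rcfType) (k : nat).
Hypothesis k0 : (0 < k)%N.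
Local Notation N := (2 * k ^ 2)%N.

Lemma lower (T : seq 'I_N) : is_tour T -> (2 * k)%:R <= tour_length (@cc R k) T.
Proof.
move=> tT.
have x0 : 'I_N := Ordinal (N0 k0).
have sT : size T = N by rewrite (perm_size tT) size_enum_ord.
rewrite (tour_length_nth (@cc R k) T x0) sT.
set qT := fun i : nat => ((nth x0 T i : nat) %/ k)%N.
apply: (@le_trans _ _ (\sum_(i < N) \sum_(Qc < 2 * k)
          (((qT i == Qc) && (qT (i.+1 %% N)%N != Qc))%:R : R))); last first.
  by apply: ler_sum => i _; apply: inner_le.
rewrite exchange_big /=.
have -> : ((2 * k)%:R : R) = \sum_(Qc < 2 * k) 1 by rewrite sumr_const card_ord.
apply: ler_sum => Qc _.
have ex1 : exists2 i, (i < N)%N & qT i == Qc.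
  have hv : (Qc * k < N)%N by have := ltn_ord Qc; nia.
  pose v : 'I_N := Ordinal hv.
  have vT : v \in T by rewrite (perm_mem tT) mem_enum.
  exists (index v T); first by have := index_mem v T; rewrite sT vT.
  by rewrite /qT nth_index //= mulnK.
have ex2 : exists2 i, (i < N)%N & ~~ (qT i == Qc).
  have hw : ((if Qc == 0 :> nat then k else 0) < N)%N.
    by case: (Qc == 0 :> nat); have := k0; nia.
  pose w : 'I_N := Ordinal hw.
  have wT : w \in T by rewrite (perm_mem tT) mem_enum.
  exists (index w T); first by have := index_mem w T; rewrite sT wT.
  rewrite /qT nth_index //=.
  case E: (Qc == 0 :> nat).
    by rewrite divnn k0 /=; move/eqP: E => ->.
  by rewrite div0n eq_sym E.
have [i hi hP] := @cyclic N (fun i => qT i == Qc) (N0 k0) ex1 ex2.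
pose i0 : 'I_N := Ordinal hi.
rewrite (bigD1 i0) //= hP /=.
have : 0 <= \sum_(j < N | j != i0) (((qT j == Qc) && (qT (j.+1 %% N)%N != Qc))%:R : R).
  by apply: sumr_ge0 => j _; apply: ler0n.
lra.
Qed.

End Lower.

Theorem mainTheorem2 :
  (forall (R : rcfType) (n : nat) (c : 'I_n -> 'I_n -> R) (s0 t : seq 'I_n),
     (3 <= n)%N -> metric c -> two_opt_output c s0 t ->
     forall opt : seq 'I_n, is_tour opt ->
       tour_length c t <= Num.sqrt (n%:R / 2) * tour_length c opt)
  /\
  (forall (R : rcfType) (k : nat), (0 < k)%N ->
     exists c : 'I_(2 * k ^ 2) -> 'I_(2 * k ^ 2) -> R,
       metric c /\
       exists (s0 opt : seq 'I_(2 * k ^ 2)),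
         is_tour s0 /\ is_tour opt /\
         0 < tour_length c opt /\
         (forall T, is_tour T -> tour_length c opt <= tour_length c T) /\
         (exists t, two_opt_output c s0 t) /\
         (forall t, two_opt_output c s0 t ->
            tour_length c t
              = Num.sqrt ((2 * k ^ 2)%N%:R / 2) * tour_length c opt)).
Proof.
split.
  move=> R n c s0 t n3 mc out opt topt; exact: part1 n3 mc out topt.
move=> R k k0.
exists (@cc R k); split; first exact: cc_metric.
exists (s0 k0), (enum 'I_(2 * k ^ 2)).
have Lo := L_opt R k0.
split; first exact: s0_tour.
split; first exact: perm_refl.
split; first by rewrite Lo ltr0n muln_gt0 k0.
split; first by move=> T hT; rewrite Lo; apply: lower.
split.
  exists (s0 k0); split; first exact: s0_tour.
  split; [exact: reach_refl | exact: s0_opt].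
move=> t [_ [rch _]].
have -> : t = s0 k0.
  inversion rch; first by [].
  exfalso; move: H => [i [j [hi _]]]; exact: (s0_opt hi).
rewrite L_s0 Lo.
have -> : ((2 * k ^ 2)%N%:R / 2 : R) = k%:R ^+ 2.
  by rewrite natrM natrX; field.
rewrite sqrtr_sqr normr_nat -natrM; congr (_%:R); lia.
Qed.
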